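(* For every $d\ge 2$, $\mu(Q_d)\le 2\,\mu(Q_{d-1})$.
   Context: $Q_d$ is the hypercube with vertex set $\{0,1\}^d$, two vertices adjacent iff their strings differ in exactly one bit. For a connected graph $G$ and $X\subseteq V(G)$, two vertices $x,y$ are $X$-visible if some shortest $x,y$-path has no internal vertex in $X$. $X$ is a mutual-visibility set if every two vertices of $X$ are $X$-visible; $\mu(G)$ is the maximum cardinality of a mutual-visibility set of $G$. *)

(* Defs.v *)
From mathcomp Require Import all_boot.
From mathcomp Require Import boolp.
Set Implicit Arguments. Unset Strict Implicit. Unset Printing Implicit Defensive.

Section Graphs.
Variable T : finType.
Variable e : rel T.

(* [x :: p] is a walk from x to y along edges of e (length = size p). *)
Definition walk (x : T) (p : seq T) (y : T) : bool :=
  path e x p && (last x p == y).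

Definition shortest_path (x : T) (p : seq T) (y : T) : Prop :=
  walk x p y /\ forall q, walk x q y -> size p <= size q.

(* internal vertices of the path x :: p (all vertices except both ends) *)
Definition internal (p : seq T) : seq T := take (size p).-1 p.

Definition visible (X : {set T}) (x y : T) : Prop :=
  exists p, shortest_path x p y /\ forall v, v \in internal p -> v \notin X.

Definition mutual_visibility_set (X : {set T}) : Prop :=
  forall x y, x \in X -> y \in X -> visible X x y.

Definition mu : nat :=
  \max_(X : {set T} | `[< mutual_visibility_set X >]) #|X|.
End Graphs.

Definition hvertex (d : nat) := {ffun 'I_d -> bool}.
Definition hcube_adj (d : nat) : rel (hvertex d) :=
  fun x y => #|[set i | x i != y i]| == 1.
Arguments hcube_adj : clear implicits.

Definition mu_Q (d : nat) : nat := mu (hcube_adj d).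

(* Main.v *)
Require Import Defs.
From mathcomp Require Import all_boot boolp.
Set Implicit Arguments. Unset Strict Implicit. Unset Printing Implicit Defensive.

Section Collapse.
Variable T : finType.
Variable e : rel T.
Variable f : T -> T.
Hypothesis hf : forall x y, e x y -> f x = f y \/ e (f x) (f y).

Fixpoint collapse (x : T) (p : seq T) : seq T :=
  match p with
  | [::] => [::]
  | z :: p' => if f z == f x then collapse z p' else f z :: collapse z p'
  end.

Lemma collapse_walk x p : path e x p ->
  path e (f x) (collapse x p) && (last (f x) (collapse x p) == f (last x p)).
Proof.
elim: p x => [|z p IH] x /=; first by rewrite eqxx.
move=> /andP[exz pz]; have /andP[H1 H2] := IH z pz.
case: eqP => [<-|ne]; first by rewrite H1.
rewrite /= H1 H2 andbT.
rewrite andbT; case: (hf exz) => [h|//]; by case: ne; rewrite h.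
Qed.

Lemma collapse_size x p : size (collapse x p) <= size p.
Proof.
elim: p x => [|z p IH] x //=; case: eqP => _ /=.
  exact: leq_trans (IH z) (leqnSn _).
exact: IH.
Qed.
End Collapse.

Section Cube.
Variable n : nat.
Definition proj (x : hvertex n.+1) : hvertex n := [ffun j => x (widen_ord (leqnSn n) j)].
Definition ext (b : bool) (y : hvertex n) : hvertex n.+1 :=
  [ffun i : 'I_n.+1 => oapp y b (insub (val i) : option 'I_n)].

Lemma proj_ext b y : proj (ext b y) = y.
Proof. by apply/ffunP => j; rewrite !ffunE /= valK. Qed.

Lemma ext_last b y : ext b y ord_max = b.
Proof. by rewrite ffunE /= insubN // ltnn. Qed.

Lemma ext_proj (x : hvertex n.+1) : ext (x ord_max) (proj x) = x.
Proof.
apply/ffunP => i; rewrite !ffunE; case: insubP => [j _ ij|] /=.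
  by rewrite ffunE; congr (x _); apply: val_inj; rewrite /= ij.
move=> h; congr (x _); apply: val_inj => /=.
by apply/eqP; rewrite eqn_leq leqNgt h /= -ltnS ltn_ord.
Qed.

Lemma ext_projE b (x : hvertex n.+1) : x ord_max = b -> ext b (proj x) = x.
Proof. by move=> <-; exact: ext_proj. Qed.

Definition dcard m (x y : hvertex m) := #|[set i | x i != y i]|.

Lemma card_diff (x y : hvertex n.+1) :
  dcard x y = (x ord_max != y ord_max) + dcard (proj x) (proj y).
Proof.
rewrite /dcard -!sum1_card !big_mkcond /= big_ord_recr /= addnC; congr (_ + _).
  by rewrite inE; case: (_ != _).
by rewrite [RHS]big_mkcond; apply: eq_bigr => j _; rewrite !inE !ffunE.
Qed.

Lemma adjE (x y : hvertex n.+1) : hcube_adj n.+1 x y = ((x ord_max != y ord_max) + dcard (proj x) (proj y) == 1).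
Proof. by rewrite /hcube_adj -card_diff. Qed.

Lemma dcard0 m (u v : hvertex m) : dcard u v = 0 -> u = v.
Proof.
move/cards0_eq => H; apply/ffunP => j; apply/eqP; apply/negPn/negP => h.
have : j \in [set j | u j != v j] by rewrite inE.
by rewrite H inE.
Qed.

Lemma dcardxx m (u : hvertex m) : dcard u u = 0.
Proof. by rewrite /dcard; apply/eqP; rewrite cards_eq0; apply/eqP/setP => i; rewrite !inE eqxx. Qed.

Lemma adj_ext b y1 y2 : hcube_adj n.+1 (ext b y1) (ext b y2) = hcube_adj n y1 y2.
Proof. by rewrite adjE !ext_last !proj_ext eqxx. Qed.

Lemma adj_proj (x y : hvertex n.+1) : x ord_max = y ord_max -> hcube_adj n.+1 x y -> hcube_adj n (proj x) (proj y).
Proof. by move=> h; rewrite adjE h eqxx. Qed.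

Definition fb b (x : hvertex n.+1) := ext b (proj x).

Lemma fb_hf b x y : hcube_adj n.+1 x y -> fb b x = fb b y \/ hcube_adj n.+1 (fb b x) (fb b y).
Proof.
rewrite adjE /fb; case hxy: (_ != _).
  by rewrite add1n eqSS => /eqP/dcard0 ->; left.
by rewrite add0n => H; right; rewrite adj_ext.
Qed.

Lemma collapse_lt b (x : hvertex n.+1) p : path (hcube_adj n.+1) x p ->
  (exists2 u, u \in p & u ord_max != x ord_max) -> size (collapse (fb b) x p) < size p.
Proof.
elim: p x => [|z p IH] x /=; first by move=> _ [].
move=> /andP[exz pz] [u up hu].
case: (boolP (z ord_max == x ord_max)) => hz.
  have -> : (fb b z == fb b x) = false.
    apply/negbTE; rewrite /fb.
    apply/negP => /eqP /(congr1 proj); rewrite !proj_ext => hp.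
    by move: exz; rewrite adjE (eqP hz) eqxx hp dcardxx.
  rewrite /= ltnS; apply: IH => //; exists u; last by rewrite (eqP hz).
  move: up; rewrite inE; case: eqP => [eu _|_ //]; by move: hu; rewrite eu (eqP hz) eqxx.
have -> : (fb b z == fb b x).
  rewrite /fb; move: exz; rewrite adjE [x ord_max == _]eq_sym hz add1n eqSS => /eqP/dcard0 ->.
  by rewrite eqxx.
by rewrite ltnS collapse_size.
Qed.
End Cube.

Lemma proj_mvs n (X : {set hvertex n.+1}) b :
  mutual_visibility_set (hcube_adj n.+1) X ->
  mutual_visibility_set (hcube_adj n) [set y | ext b y \in X].
Proof.
move=> HX y1 y2; rewrite !inE => h1 h2.
have [p [[wp sp] ip]] := HX _ _ h1 h2.
move: wp => /andP[pp /eqP lp].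
have allb : forall u, u \in p -> u ord_max = b.
  move=> u up; apply/eqP; apply/negPn/negP => hu.
  have hlt := collapse_lt b pp (ex_intro2 _ _ u up (ltac:(by rewrite ext_last) : u ord_max != (ext b y1) ord_max)).
  have /andP[cw /eqP cl] := collapse_walk (@fb_hf n b) pp.
  have fx : fb b (ext b y1) = ext b y1 by rewrite /fb proj_ext.
  rewrite fx in cw cl; rewrite lp /fb proj_ext in cl.
  have : walk (hcube_adj n.+1) (ext b y1) (collapse (fb b) (ext b y1) p) (ext b y2).
    by rewrite /walk cw cl eqxx.
  by move/sp; rewrite leqNgt hlt.
exists (map (@proj n) p); split; first split.
- rewrite /walk -[y1](proj_ext b) path_map last_map lp proj_ext eqxx andbT.
  apply: (sub_in_path (P := [pred u : hvertex n.+1 | u ord_max == b])) pp.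
    move=> u v /eqP hu /eqP hv /=; apply: adj_proj; by rewrite hu hv.
  rewrite /= ext_last eqxx /=; apply/allP => u /allb /= ->; exact: eqxx.
- move=> q /andP[qp /eqP ql]; rewrite size_map -[size q](size_map (ext b)); apply: sp.
  rewrite /walk path_map last_map ql eqxx andbT.
  by apply: sub_path qp => u v /=; rewrite adj_ext.
- move=> v; rewrite /internal size_map -map_take => /mapP[u ui ->].
  rewrite inE ext_projE; first exact: ip.
  exact/allb/(mem_take ui).
Qed.

Theorem corollary3p2 (d : nat) : 2 <= d -> mu_Q d <= 2 * mu_Q d.-1.
Proof.
case: d => [|n] // _ /=.
rewrite /mu_Q /mu; apply/bigmax_leqP => X /asboolP HX.
pose Xb b := [set y | ext b y \in X].
have sub : X \subset ext false @: Xb false :|: ext true @: Xb true.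
  apply/subsetP => x xX.
  have xb : ext (x ord_max) (proj x) \in X by rewrite ext_proj.
  rewrite -(ext_proj x); move: xb; case: (x ord_max) => xb; rewrite inE; apply/orP;
    [right|left]; apply: imset_f; by rewrite inE.
apply: (leq_trans (subset_leq_card sub)); rewrite cardsU.
apply: (leq_trans (leq_subr _ _)); rewrite mul2n -addnn.
apply: leq_add; apply: (leq_trans (leq_imset_card _ _));
  apply: (leq_bigmax_cond (F := fun Y : {set hvertex n} => #|Y|)); apply: asboolT; exact: proj_mvs.
Qed.
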